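(* Let $\mathcal S=(E,\mathcal I)$ be an $r$-covering system. If $\texttt{a}$ and $\texttt{a}'$ are two activities of $\mathcal S$, then they have the same activity vector (equivalently, the same activity polynomial).
   Context: For finite sets $X\subseteq Y$, write $[X,Y]=\{Z: X\subseteq Z\subseteq Y\}$. An $r$-covering system is a pair $\mathcal S=(E,\mathcal I)$ where $E$ is a finite set and $\mathcal I$ is a collection of subsets of $E$, each of cardinality at most $r$, such that for every $I\in\mathcal I$ there exists $B\in\mathcal I$ with $|B|=r$ and $[I,B]\subseteq\mathcal I$. Members of $\mathcal I$ of cardinality $r$ are called bases, and $\mathcal B$ denotes the set of bases. An activity of $\mathcal S$ is a function $\texttt{a}:\mathcal B\to 2^E$ such that for every $B\in\mathcal B$, $\texttt{a}(B)\subseteq B$ and $[B\setminus\texttt{a}(B),B]\subseteq\mathcal I$, and such that every $I\in\mathcal I$ belongs to $[B\setminus\texttt{a}(B),B]$ for exactly one $B\in\mathcal B$. The activity vector is $(a_0,\dots,a_r)$ where $a_i$ is the number of bases $B$ with $|\texttt{a}(B)|=i$. *)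

(* Defs.v *)
From mathcomp Require Import all_boot.
Set Implicit Arguments. Unset Strict Implicit. Unset Printing Implicit Defensive.

Definition interval {E : finType} (X Y : {set E}) : {set {set E}} :=
  [set Z : {set E} | (X \subset Z) && (Z \subset Y)].

Definition covering_system {E : finType} (r : nat) (I : {set {set E}}) : Prop :=
  (forall X, X \in I -> #|X| <= r) /\
  (forall X, X \in I -> exists B, [/\ B \in I, #|B| = r & interval X B \subset I]).

Definition bases {E : finType} (r : nat) (I : {set {set E}}) : {set {set E}} :=
  [set B in I | #|B| == r].

(* An activity (only its values on bases matter). *)
Definition activity {E : finType} (r : nat) (I : {set {set E}})
    (a : {set E} -> {set E}) : Prop :=
  (forall B, B \in bases r I -> a B \subset B /\ interval (B :\: a B) B \subset I) /\
  (forall X, X \in I ->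
     exists! B, B \in bases r I /\ X \in interval (B :\: a B) B).

Definition activity_vector {E : finType} (r : nat) (I : {set {set E}})
    (a : {set E} -> {set E}) : seq nat :=
  [seq #|[set B in bases r I | #|a B| == i]| | i <- iota 0 r.+1].

(* Main.v *)
Require Import Defs.
From mathcomp Require Import all_boot.
From mathcomp Require Import zify.
Set Implicit Arguments. Unset Strict Implicit.

Section Proof.
Variables (E : finType) (r : nat) (I : {set {set E}}).

Definition nv (a : {set E} -> {set E}) i := #|[set B in bases r I | #|a B| == i]|.

Lemma count_classes a (Ha : activity r I a) (P : pred {set E}) :
  #|[set X in I | P X]| =
  \sum_(B in bases r I) #|[set X in interval (B :\: a B) B | P X]|.
Proof.
transitivity (\sum_(X in [set X in I | P X])
                 \sum_(B in bases r I | X \in interval (B :\: a B) B) 1).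
  rewrite -sum1_card; apply: eq_bigr => X; rewrite inE => /andP[XI _].
  have [B0 [[B0b XB0] Hu]] := Ha.2 X XI.
  rewrite (big_pred1 B0) // => B /=.
  apply/andP/eqP => [[Bb XB] | ->]; last by [].
  by symmetry; apply: Hu.
rewrite (exchange_big_dep (fun B => B \in bases r I)) //=; last by move=> ? ? _ /andP[].
apply: eq_bigr => B Bb; rewrite -sum1_card; apply: eq_bigl => X.
rewrite Bb /=.
case: (boolP (X \in interval (B :\: a B) B)) => XB.
  have XI : X \in I by have [_ /subsetP] := Ha.1 B Bb; apply.
  by rewrite !inE XI /= andbT; move: (XB); rewrite inE => ->.
by rewrite andbF [RHS]in_set (negbTE XB).
Qed.

Lemma interval_count (B A : {set E}) j :
  A \subset B -> #|B| = r ->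
  #|[set X in interval (B :\: A) B | #|X| + j == r]| = 'C(#|A|, j).
Proof.
move=> AB cB; rewrite -cards_draws.
have -> : [set X in interval (B :\: A) B | #|X| + j == r] =
          (fun Y => B :\: Y) @: [set Y : {set E} | Y \subset A & #|Y| == j].
  apply/setP => X; rewrite !inE; apply/idP/imsetP.
    case/andP=> /andP[DX XB] /eqP cX; exists (B :\: X).
      rewrite inE; apply/andP; split.
        apply/subsetP => x; rewrite inE => /andP[xX xB].
        apply/negPn/negP => xA; move/subsetP: DX => /(_ x).
        by rewrite inE xA xB (negbTE xX) => /(_ isT).
      by rewrite cardsD (setIidPr XB) cB -cX addKn.
    by rewrite setDDr setDv set0U (setIidPr XB).
  case=> Y; rewrite inE => /andP[YA /eqP cY] ->.
  have YB : Y \subset B by apply: subset_trans AB.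
  rewrite setDS // subsetDl /= cardsD (setIidPr YB) cB cY subnK //.
  by rewrite -cY -cB subset_leq_card.
rewrite card_in_imset // => Y Z; rewrite !inE => /andP[YA _] /andP[ZA _] e.
have YB : Y \subset B by apply: subset_trans AB.
have ZB : Z \subset B by apply: subset_trans AB.
have h (W : {set E}) : W \subset B -> W = B :\: (B :\: W).
  by move=> WB; rewrite setDDr setDv set0U (setIidPr WB).
by rewrite (h Y YB) (h Z ZB) e.
Qed.

Lemma key a (Ha : activity r I a) j :
  #|[set X in I | #|X| + j == r]| = \sum_(i < r.+1) nv a i * 'C(i, j).
Proof.
rewrite (count_classes Ha).
have aB B : B \in bases r I -> a B \subset B /\ #|B| = r.
  move=> Bb; split; first exact: (Ha.1 B Bb).1.
  by move: Bb; rewrite inE => /andP[_ /eqP].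
rewrite (eq_bigr (fun B => 'C(#|a B|, j))); last first.
  by move=> B /aB [h1 h2]; apply: interval_count.
rewrite (partition_big (fun B => inord #|a B| : 'I_r.+1) predT) //=.
apply: eq_bigr => i _.
rewrite (eq_bigr (fun _ => 'C(i, j))); last first.
  move=> B /andP[/aB [h1 h2] /eqP <-]; rewrite inordK //.
  by rewrite ltnS -h2 subset_leq_card.
rewrite sum_nat_const /nv; congr (_ * _); apply: eq_card => B.
rewrite [RHS]in_set -[LHS]/((B \in bases r I) && (inord #|a B| == i)).
case: (boolP (B \in bases r I)) => Bb //=.
have [h1 h2] := aB B Bb.
have lt : #|a B| < r.+1 by rewrite ltnS -h2 subset_leq_card.
by rewrite -(inj_eq val_inj) /= inordK.
Qed.

Lemma step a a' (Ha : activity r I a) (Ha' : activity r I a') j :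
  j <= r -> (forall i, j < i -> i <= r -> nv a i = nv a' i) -> nv a j = nv a' j.
Proof.
move=> jr IH.
pose o := Ordinal (jr : j < r.+1).
have e1 := key Ha j; have e2 := key Ha' j.
rewrite (bigD1 o) //= binn muln1 in e1.
rewrite (bigD1 o) //= binn muln1 in e2.
have hs : \sum_(i < r.+1 | i != o) nv a i * 'C(i, j) =
          \sum_(i < r.+1 | i != o) nv a' i * 'C(i, j).
  apply: eq_bigr => i ne; case: (ltngtP j i) => [lt | gt | eq].
  - by rewrite IH // -ltnS.
  - by rewrite bin_small // !muln0.
  - have eio : i = o by apply: val_inj; rewrite /= eq.
    by rewrite eio eqxx in ne.
apply: (@addIn (\sum_(i < r.+1 | i != o) nv a' i * 'C(i, j))).
by rewrite -{1}hs -e1 e2.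
Qed.

End Proof.

Theorem mainTheorem4 (E : finType) (r : nat) (I : {set {set E}})
    (a a' : {set E} -> {set E}) :
  covering_system r I -> activity r I a -> activity r I a' ->
  activity_vector r I a = activity_vector r I a'.
Proof.
move=> _ Ha Ha'.
have H : forall d j, r - d <= j -> j <= r -> nv r I a j = nv r I a' j.
  elim=> [|d IHd] j h jr.
    apply: step => // i ji ir; lia.
  apply: step => // i ji ir; apply: IHd => //.
  lia.
rewrite /activity_vector; apply/eq_in_map => i; rewrite mem_iota add0n ltnS => ir.
have := H r i; rewrite subnn => /(_ isT ir); by [].
Qed.
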